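(* Let $k$ be an algebraically closed field of characteristic exponent $p$, let $q\ne p$ be an odd prime, let $E$ be an extraspecial group of order $q^{1+2a}$, $a\ge 1$, and let $\psi:E\to GL_d(k)$ be a faithful irreducible representation. Then $|\mathrm{Aut}\,E|\le 2d^{2\log_3 d+3}$.
   Context: The characteristic exponent $p$ is $\operatorname{char}k$ if positive, else $1$. *)

(* Defs.v *)
From Stdlib Require Import Reals.
From mathcomp Require Import all_boot all_order all_algebra all_fingroup all_solvable all_character.

(* The real number 2 * d ^ (2 * log_3 d + 3), in Stdlib's reals R
   (Rpower x y = exp (y * ln x); log_3 d = ln d / ln 3). *)
Definition aut_bound (d : nat) : R :=
  Rmult (INR 2) (Rpower (INR d)
    (Rplus (Rmult (INR 2) (Rdiv (ln (INR d)) (ln (INR 3)))) (INR 3))).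

Local Open Scope ring_scope.

Definition char_exponent (F : fieldType) (p : nat) : Prop :=
  (p \in [pchar F]) \/ ((forall r : nat, r \notin [pchar F]) /\ p = 1%N).

(* Main.v *)
Require Import Defs.
From Stdlib Require Import Reals Lra.
From mathcomp Require Import all_boot all_order all_algebra all_fingroup all_solvable all_character.
From mathcomp Require Import zify.
Set Implicit Arguments. Unset Strict Implicit. Unset Printing Implicit Defensive.

Module GroupPart.
Local Open Scope group_scope.
Fixpoint tri (k : nat) : nat := if k is k'.+1 then (tri k' + k'.+2)%N else 0%N.

Lemma tri2 k : (2 * tri k = k * (k + 3))%N.
Proof. elim: k => //= k IH; rewrite mulnDr IH; lia. Qed.

Lemma tri_mono m n : (m <= n)%N -> (tri m <= tri n)%N.
Proof. move=> le; have := tri2 m; have := tri2 n; nia. Qed.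

Section Fix.
Variables (gT : finGroupType) (E : {group gT}).

Lemma aut1 (a : {perm gT}) (Aa : a \in Aut E) : a 1 = 1.
Proof. have := morph1 (autm Aa). rewrite autmE. done. Qed.
Lemma autM (a : {perm gT}) (Aa : a \in Aut E) x y :
  x \in E -> y \in E -> a (x * y) = a x * a y.
Proof. move=> Ex Ey. have := morphM (autm Aa) Ex Ey. rewrite autmE. done. Qed.

Lemma aut_fix_gen (a : {perm gT}) (S : {set gT}) :
  a \in Aut E -> S \subset E -> (forall x, x \in S -> a x = x) ->
  forall x, x \in <<S>> -> a x = x.
Proof.
move=> Aa sSE fS.
pose F := [set x in E | a x == x].
have gF : group_set F.
  apply/group_setP; rewrite /F; split.
    by rewrite inE group1 /=; apply/eqP; apply: (aut1 Aa).
  move=> x y; rewrite !inE; case/andP => Ex /eqP ax; case/andP => Ey /eqP ay.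
  by rewrite groupM //= (autM Aa) // ax ay.
have sSF : S \subset (group gF) by apply/subsetP=> x Sx; rewrite /F; by rewrite inE (subsetP sSE x Sx) /= fS.
have sgF : <<S>> \subset (group gF) by rewrite gen_subG.
by move=> x /(subsetP sgF); rewrite inE => /andP[_ /eqP].
Qed.
End Fix.
Section Main.
Variables (q : nat) (gT : finGroupType) (E : {group gT}).
Hypotheses (qE : q.-group E) (esE : extraspecial E).

Notation AU U := ('C_(Aut E)(U | 'P)).

Lemma commZ x y : x \in E -> y \in E -> [~ x, y] \in 'Z(E).
Proof.
move=> Ex Ey; have [[_ <-] _] := esE.
by apply: mem_commg.
Qed.

Lemma autR (a : {perm gT}) (Aa : a \in Aut E) x y :
  x \in E -> y \in E -> a [~ x, y] = [~ a x, a y].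
Proof. move=> Ex Ey. have := morphR (autm Aa) Ex Ey. rewrite autmE. done. Qed.

Lemma orbit_sub (U : {group gT}) h :
  'Z(E) \subset U -> U \subset E -> h \in E ->
  orbit 'P (AU U) h \subset h *: 'C_E(U).
Proof.
move=> sZU sUE Eh; apply/subsetP => _ /imsetP[a Aa ->].
case/setIP: Aa => Aa CUa.
rewrite /= mem_lcoset.
have Eah : a h \in E by apply: Aut_closed.
rewrite inE groupM ?groupV //=.
apply/centP => u Uu.
have Eu : u \in E by apply: (subsetP sUE).
have au : a u = u by move/astabP: CUa => /(_ u Uu).
have Zhu : [~ h, u] \in 'Z(E) by apply: commZ.
have ahu : a [~ h, u] = [~ h, u].
  by move/astabP: CUa => /(_ _ (subsetP sZU _ Zhu)).
set k := h^-1 * a h.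
have ahk : a h = h * k by rewrite /k mulKVg.
have Ek : k \in E by rewrite groupM ?groupV.
move: ahu; rewrite (autR Aa) // au ahk commMgJ.
have -> : [~ h, u] ^ k = [~ h, u].
  apply/conjg_fixP. move: Zhu; rewrite inE => /andP[_ /centP cZ].
  by apply/commgP; apply: cZ.
move/(canRL (mulKg _)); rewrite mulVg => /esym k1.
by apply/commgP; rewrite k1.
Qed.

Lemma stab_sub (U : {group gT}) h : U \subset E -> h \in E ->
  'C_(AU U)[h | 'P] \subset AU (U <*> <[h]>).
Proof.
move=> sUE Eh; apply/subsetP => a /setIP[/setIP[Aa CUa] Cha].
apply/setIP; split => //; apply/astabP => x Ux.
have sS : U :|: <[h]> \subset E by rewrite subUset sUE cycle_subG.
apply: (aut_fix_gen Aa sS) => // y; rewrite inE => /orP[Uy|hy].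
  by move/astabP: CUa => /(_ y Uy).
have sh : [set h] \subset E by rewrite sub1set.
apply: (aut_fix_gen Aa sh) => // z; rewrite inE => /eqP ->.
by move/astab1P: Cha.
Qed.

Lemma AU_E : #|AU E| <= 1.
Proof.
rewrite -(cards1 (1 : {perm gT})); apply: subset_leq_card; apply/subsetP => a.
case/setIP => Aa CEa; rewrite inE; apply/eqP; apply: (eq_Aut Aa (group1 _)) => x Ex.
by rewrite perm1; move/astabP: CEa => /(_ x Ex).
Qed.

Lemma index_qpow (U : {group gT}) : {k | #|E : U| = (q ^ k)%N}.
Proof. exact: p_natP (pnat_dvd (dvdn_indexg E U) qE). Qed.

Lemma AU_bound k (U : {group gT}) : 'Z(E) \subset U -> U \subset E ->
  #|E : U| = (q ^ k)%N -> #|AU U| <= q ^ tri k.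
Proof.
have q_pr := extraspecial_prime qE esE.
have q_gt1 := prime_gt1 q_pr.
have oZ := card_center_extraspecial qE esE.
elim/ltn_ind: k U => k IH U sZU sUE iU.
have [eUE | ltUE] := eqVproper sUE.
  have -> : U = E by apply: val_inj.
  by apply: leq_trans AU_E _; rewrite expn_gt0 prime_gt0.
have [_ [h Eh nUh]] := properP ltUE.
pose U' := (U <*> <[h]>)%G.
have sUU' : U \subset U' by apply: joing_subl.
have sU'E : U' \subset E by rewrite /= join_subG sUE cycle_subG.
have U'h : h \in U' by apply: (subsetP (joing_subr _ _)); apply: cycle_id.
have [k' ik'] := index_qpow U'.
have ltUU' : #|U| < #|U'|.
  apply: proper_card; apply/properP; split => //; exists h => //.
have L1 := Lagrange sUE; have L2 := Lagrange sU'E.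
have ltk : k' < k.
  rewrite -(ltn_exp2l _ _ q_gt1) -ik' -iU.
  have Ep : 0 < #|E| by apply: cardG_gt0.
  have U'p : 0 < #|U'| by apply: cardG_gt0.
  rewrite -L2 in L1; nia.
case: k ltk IH iU => // k ltk IH iU.
rewrite -(card_orbit_stab 'P (AU U) h) /=.
have o1 : #|orbit 'P (AU U) h| <= q ^ k.+1 * q.
  apply: leq_trans (subset_leq_card (orbit_sub sZU sUE Eh)) _.
  rewrite card_lcoset (card_subcent_extraspecial qE esE sUE) iU.
  by rewrite (setIidPl sZU) oZ mulnC.
have o2 : #|'C_(AU U)[h | 'P]| <= q ^ tri k.
  apply: leq_trans (subset_leq_card (stab_sub sUE Eh)) _.
  apply: leq_trans (IH k' _ _ _ _ ik') _ => //.
  - by apply: subset_trans sUU'.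
  - by apply: leq_pexp2l; [apply: ltnW | apply: tri_mono].
apply: leq_trans (leq_mul o1 o2) _.
by rewrite -expnSr -expnD /= addnC.
Qed.

Lemma Aut_bound k : #|E : 'Z(E)| = (q ^ k)%N -> #|Aut E| <= q.-1 * q ^ tri k.
Proof.
move=> iZ.
have q_pr := extraspecial_prime qE esE.
have q_gt1 := prime_gt1 q_pr.
have oZ := card_center_extraspecial qE esE.
have sZE : 'Z(E) \subset E := center_sub E.
have cZ1 : #|'Z(E)^#| = q.-1.
  by move: (cardsD1 1 'Z(E)); rewrite group1 oZ add1n => ->.
have [z Zz] : exists z, z \in 'Z(E)^#.
  by apply/set0Pn; rewrite -card_gt0 cZ1 -ltnS prednK ?prime_gt0.
have Ez : z \in E by apply: (subsetP sZE); case/setD1P: Zz.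
rewrite -(card_orbit_stab 'P (Aut E) z).
apply: leq_mul.
  rewrite -cZ1; apply: subset_leq_card; apply/subsetP => _ /imsetP[a Aa ->] /=.
  apply/setD1P; split.
    have /setD1P[nz1 _] := Zz.
    apply: contra nz1 => /eqP az1; change (a z = 1) in az1; apply/eqP.
    by apply: (perm_inj (s := a)); rewrite az1 (aut1 Aa).
  case/charP: (center_char E) => _ /(_ (autm Aa)).
  rewrite injm_autm im_autm => /(_ isT erefl) <-.
  change (a z \in (autm Aa) @* 'Z(E)); rewrite -{1}(autmE Aa). apply: mem_morphim => //; by case/setD1P: Zz.
apply: leq_trans (AU_bound (subxx _) sZE iZ).
apply: subset_leq_card; apply/subsetP => a /setIP[Aa Cza].
apply/setIP; split => //; apply/astabP => x.
rewrite (nt_gen_prime _ Zz) ?oZ //.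
have sz : [set z] \subset E by rewrite sub1set.
apply: (aut_fix_gen Aa sz) => y; rewrite inE => /eqP ->.
by move/astab1P: Cza.
Qed.
End Main.

Lemma deg_extraspecial (k : closedFieldType) (p q a d : nat) (gT : finGroupType)
    (E : {group gT}) (psi : mx_representation k E d) :
  (p \in [pchar k]%R \/ ((forall r : nat, r \notin [pchar k]%R) /\ p = 1%N)) ->
  prime q -> q <> p ->
  extraspecial E -> #|E| = (q ^ (1 + 2 * a))%N ->
  mx_faithful psi -> mx_irreducible psi -> d = (q ^ a)%N.
Proof.
move=> chp q_pr qp esE oE ff irr.
have qE : q.-group E by rewrite /pgroup oE pnatX (pnat_id q_pr).
have oE' : #|E| = (q ^ a.*2.+1)%N by rewrite oE -muln2 add1n mulnC.
have nq : q \notin [pchar k]%R.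
  case: chp => [pch | [nch _]] //.
  by rewrite (GRing.pcharf_eq pch) inE; apply/eqP.
have F'E : ([pchar k]%R)^'.-group E.
  apply: sub_pgroup qE => r; rewrite inE => /eqP ->; by rewrite inE.
have ffU : rstab psi 1%:M%R == 1.
  by rewrite eqEsubset sub1G andbT.
have [rk _] := faithful_repr_extraspecial_pchar qE esE oE'
  (@group_closure_closed_field k gT E) F'E irr ffU.
by rewrite mxrank1 in rk.
Qed.
End GroupPart.
Section Real.
Local Open Scope R_scope.

Lemma INR_expn q n : INR (expn q n) = INR q ^ n.
Proof. elim: n => [|n IH] //=; rewrite expnS ?mulnE mult_INR IH; ring. Qed.

Lemma exp_le x y : x <= y -> exp x <= exp y.
Proof. case/Rle_lt_or_eq_dec => [h|->]; [left; exact: exp_increasing | lra]. Qed.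

Lemma ln_le' x y : 0 < x -> x <= y -> ln x <= ln y.
Proof. move=> x0; case/Rle_lt_or_eq_dec => [h|->]; [left; exact: ln_increasing | lra]. Qed.

Lemma real_part (q a N : nat) : (3 <= q)%N -> (1 <= a)%N ->
  (N <= q.-1 * expn q (a * (2 * a + 3)))%N -> INR N <= aut_bound (expn q a).
Proof.
move=> q3 a1 hN.
set Q := INR q. set A := INR a.
have Q3 : 3 <= Q by rewrite /Q; have := le_INR 3 q (elimT leP q3); simpl; lra.
have A1 : 1 <= A by rewrite /A; have := le_INR 1 a (elimT leP a1); simpl; lra.
have Q0 : 0 < Q by lra.
set l := ln Q. set c := ln 3.
have c0 : 0 < c by rewrite /c -ln_1; apply: ln_increasing; lra.
have lc : c <= l by apply: ln_le'; lra.
have eQ : exp l = Q by apply: exp_ln.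
have e3 : exp c = 3 by apply: exp_ln; lra.
set m := (a * (2 * a + 3))%N.
have Im : INR m = 2 * A * A + 3 * A.
  rewrite /m ?mulnE -?plusE !mult_INR plus_INR mult_INR /A; simpl; ring.
have h1 : INR N <= (Q - 1) * exp (INR m * l).
  apply: Rle_trans (le_INR _ _ (elimT leP hN)) _.
  rewrite ?mulnE mult_INR INR_expn -Rpower_pow // /Rpower -/l.
  have -> : INR q.-1 = Q - 1.
    rewrite /Q -{2}(prednK (n := q)); last by lia.
    rewrite S_INR; ring.
  exact: Rle_refl.
rewrite /aut_bound INR_expn /Rpower ln_pow // -/l -/Q -/c -/A.
have -> : INR 2 = 2 by simpl; lra.
have -> : INR 3 = 3 by simpl; lra.
set t := l / c.
have t1 : 1 <= t.
  rewrite /t; apply: (Rmult_le_reg_r c) => //; field_simplify; lra.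
have key : INR m * l + 2 * (l - c) <= (2 * (A * l / c) + 3) * (A * l).
  rewrite Im.
  have -> : (2 * (A * l / c) + 3) * (A * l) = 2 * A * A * t * l + 3 * A * l
    by rewrite /t; field; lra.
  have hAt : 1 <= A * A * t by nra.
  have hl : 0 <= l - c by lra.
  have l0 : 0 < l by lra.
  have ht : l * t = t * (l - c) + l by rewrite /t; field; lra.
  have hp : 0 <= (A * A * t - 1) * (l - c) by apply: Rmult_le_pos; lra.
  have -> : 2 * A * A * t * l = 2 * A * A * (t * (l - c) + l) by rewrite -ht; ring.
  nra.
have E2 : exp (INR m * l + 2 * (l - c)) = exp (INR m * l) * (Q / 3) ^ 2.
  rewrite exp_plus; congr (_ * _).
  have -> : 2 * (l - c) = (l + - c) + (l + - c) by ring.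
  rewrite !exp_plus exp_Ropp eQ e3 /=; field.
have := @exp_le _ _ key; rewrite E2 => hk.
have ep := exp_pos (INR m * l).
have hq : Q - 1 <= 2 * (Q / 3) ^ 2 by nra.
rewrite -/c.
apply: Rle_trans h1 _.
apply: Rle_trans (Rmult_le_compat_l 2 _ _ _ hk); last lra.
have -> : 2 * (exp (INR m * l) * (Q / 3) ^ 2) = (2 * (Q / 3) ^ 2) * exp (INR m * l) by ring.
apply: Rmult_le_compat_r; lra.
Qed.
End Real.

Theorem corollary8p3 (k : closedFieldType) (p q a d : nat) (gT : finGroupType)
    (E : {group gT}) (psi : mx_representation k E d) :
  char_exponent k p -> prime q -> odd q -> q <> p ->
  extraspecial E -> #|E| = (q ^ (1 + 2 * a))%N -> (1 <= a)%N ->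
  mx_faithful psi -> mx_irreducible psi ->
  Rle (INR #|Aut E|) (aut_bound d).
Proof.
move=> chp q_pr oq qp esE oE a1 ff irr.
have -> := GroupPart.deg_extraspecial chp q_pr qp esE oE ff irr.
have q3 : (3 <= q)%N.
  have := prime_gt1 q_pr; case: q oq {q_pr qp oE} => [|[|[|q]]] //.
have qE : (q.-group E)%g by rewrite /pgroup oE pnatX (pnat_id q_pr).
have oZ := card_center_extraspecial qE esE.
have iZ : #|E : 'Z(E)|%g = (q ^ (2 * a))%N.
  have L := Lagrange (center_sub E).
  rewrite oZ oE expnD expn1 in L.
  by apply/eqP; rewrite -(eqn_pmul2l (prime_gt0 q_pr)) L.
have hb := GroupPart.Aut_bound qE esE iZ.
apply: real_part => //.
suff -> : (a * (2 * a + 3) = GroupPart.tri (2 * a))%N by [].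
apply/eqP; rewrite -(eqn_pmul2l (isT : (0 < 2)%N)) GroupPart.tri2.
by rewrite mulnA.
Qed.
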